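(* Let $\Gamma_1,\Gamma_2\subseteq\{0,1\}^\infty$. If a learning function $l_1$ uniformly weakly detects that every $X\in\Gamma_1$ is patterned and a learning function $l_2$ uniformly weakly detects that every $X\in\Gamma_2$ is patterned, then there exists a learning function $l_3$ that uniformly weakly detects that every $X\in\Gamma_1\cup\Gamma_2$ is patterned. Moreover, if $l_1$ and $l_2$ are computable, then $l_3$ can be chosen computable.
   Context: A learning function is a function $l:\{0,1\}^*\to\{\mathrm{yes},\mathrm{no}\}$. $Y\upharpoonright m$ is the length-$m$ prefix of $Y$; $\lambda$ is the uniform (Lebesgue) measure on $\{0,1\}^\infty$. A learning function $l$ uniformly weakly detects that $X$ is patterned iff (i) $l(X\upharpoonright m)=\mathrm{yes}$ for infinitely many $m$, and (ii) for all $n\in\mathbb N$, $\lambda(\{Y : \#\{m: l(Y\upharpoonright m)=\mathrm{yes}\}\ge n\})\le 2^{-n}$. *)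

(* Defs.v *)
From mathcomp Require Import all_boot all_order all_algebra.
From mathcomp Require Import all_classical all_reals ereal sequences.
From mathcomp Require Import Rstruct.
Set Implicit Arguments. Unset Strict Implicit. Unset Printing Implicit Defensive.
Import Order.TTheory GRing.Theory Num.Theory.
Local Open Scope classical_set_scope.
Local Open Scope ring_scope.

Definition cantor := nat -> bool.
Definition bstring := seq bool.

(* A learning function l : {0,1}^* -> {yes,no}; yes = true, no = false. *)
Definition learning_fn := bstring -> bool.

Definition pre (Y : cantor) (m : nat) : bstring := mkseq Y m.

Definition cyl (s : bstring) : set cantor := [set Y | pre Y (size s) = s].

(* The uniform (Lebesgue / fair-coin) measure lambda on {0,1}^oo, given by the
   standard Caratheodory outer measure generated by lambda([s]) = 2^-|s|:
   lambda(A) = inf { sum_i 2^-|c i| : A is covered by the cylinders [c i] }.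
   On Borel sets this is the uniform measure. *)
Definition lambda (A : set cantor) : \bar Rdefinitions.R :=
  ereal_inf [set (\sum_(0 <= i <oo) ((2%:R : Rdefinitions.R) ^- size (c i))%:E)%E
            | c in [set c : nat -> bstring | A `<=` \bigcup_i cyl (c i)]].

(* #{ m : l (Y|`m) = yes } >= n  (the set may be infinite). *)
Definition yes_count_ge (l : learning_fn) (Y : cantor) (n : nat) : Prop :=
  exists ms : seq nat, [/\ uniq ms, size ms = n & all (fun m => l (pre Y m)) ms].

Definition unif_weak_detects (l : learning_fn) (X : cantor) : Prop :=
  (forall N : nat, exists2 m : nat, (N <= m)%N & l (pre X m)) /\
  (forall n : nat, (lambda [set Y | yes_count_ge l Y n] <= ((2%:R : Rdefinitions.R) ^- n)%:E)%E).

Definition unif_weak_detects_all (l : learning_fn) (G : set cantor) : Prop :=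
  forall X, G X -> unif_weak_detects l X.

(* Codes; arguments are lists of naturals (missing arguments read as 0). *)
Inductive prf : Type :=
| PZero : prf
| PSucc : prf
| PProj : nat -> prf
| PComp : prf -> seq prf -> prf
| PRec  : prf -> prf -> prf
| PMu   : prf -> prf.

Inductive peval : prf -> seq nat -> nat -> Prop :=
| ev_zero xs : peval PZero xs 0
| ev_succ xs : peval PSucc xs (nth 0 xs 0).+1
| ev_proj i xs : peval (PProj i) xs (nth 0 xs i)
| ev_comp f gs xs ys y :
    pevals gs xs ys -> peval f ys y -> peval (PComp f gs) xs y
| ev_rec0 g h xs y : peval g xs y -> peval (PRec g h) (0 :: xs) y
| ev_recS g h n xs y z :
    peval (PRec g h) (n :: xs) y -> peval h (n :: y :: xs) z ->
    peval (PRec g h) (n.+1 :: xs) z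
| ev_mu f xs n :
    peval f (n :: xs) 0 ->
    (forall k, (k < n)%N -> exists2 v, peval f (k :: xs) v & v <> 0) ->
    peval (PMu f) xs n
with pevals : seq prf -> seq nat -> seq nat -> Prop :=
| evs_nil xs : pevals [::] xs [::]
| evs_cons g gs xs y ys :
    peval g xs y -> pevals gs xs ys -> pevals (g :: gs) xs (y :: ys).

(* Binary strings coded bijectively as positive naturals: s |-> the number
   whose binary expansion is 1 followed by s. *)
Definition enc (s : bstring) : nat := foldl (fun n (b : bool) => (n.*2 + b)%N) 1%N s.

Definition computable (l : learning_fn) : Prop :=
  exists c : prf, forall s : bstring, peval c [:: enc s] (nat_of_bool (l s)).

(* Main.v *)
Require Import Defs.
From mathcomp Require Import all_boot all_order all_algebra all_classical all_reals ereal sequences.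
From mathcomp Require Import Rstruct.
From mathcomp Require Import zify ring lra.
Import Order.TTheory GRing.Theory Num.Theory.
Local Open Scope classical_set_scope.

Fixpoint cnt (l : learning_fn) (Y : cantor) (m : nat) : nat :=
  if m is m'.+1 then cnt l Y m' + l (pre Y m') else 0.

Lemma cnt_mono l Y m k : cnt l Y m <= cnt l Y (m + k).
Proof. elim: k => [|k IH]; first by rewrite addn0. rewrite addnS /=; lia. Qed.

Lemma cnt_le l Y m : cnt l Y m <= m.
Proof. elim: m => //= m IH; case: (l _) => /=; lia. Qed.

Lemma cnt_count l Y m : cnt l Y m = count (fun k => l (pre Y k)) (iota 0 m).
Proof. elim: m => // m IH. by rewrite -[in RHS]addn1 iotaD count_cat /= -IH add0n addn0. Qed.

Lemma ycg_cnt l Y n : yes_count_ge l Y n <-> exists m, n <= cnt l Y m.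
Proof.
split.
- move=> [ms [u sz al]]; exists (\max_(k <- ms) k).+1.
  rewrite cnt_count -size_filter -sz; apply: uniq_leq_size => // k km.
  rewrite mem_filter mem_iota /= (allP al) //= ltnS.
  by apply: (@leq_bigmax_seq _ ms xpredT (fun i => i) k km).
- move=> [m hm]; exists (take n (seq.filter (fun k => l (pre Y k)) (iota 0 m))); split.
  + by apply: take_uniq; apply: filter_uniq; apply: iota_uniq.
  + by rewrite size_take size_filter -cnt_count; case: ltngtP hm => //; lia.
  + apply/allP => k /mem_take; rewrite mem_filter; by case/andP.
Qed.

Lemma cnt_gt l Y N m : cnt l Y N < cnt l Y m -> exists2 k, N <= k & l (pre Y k).
Proof.
move=> h; case: (pselect (exists2 k, N <= k & l (pre Y k))) => // hn; exfalso.
suff : cnt l Y m <= cnt l Y N by lia.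
elim: m {h} => [|m IH]; first by [].
case: (ltnP m N) => hm.
  by have := cnt_mono l Y m.+1 (N - m.+1); rewrite subnKC.
have : ~ (N <= m /\ l (pre Y m)) by move=> [a b]; apply: hn; exists m.
by move: IH => /=; case: (l _) => /=; lia.
Qed.

Lemma take_pre Y m k : k <= m -> take k (pre Y m) = pre Y k.
Proof. by move=> h; rewrite /pre /mkseq -map_take take_iota; congr (map _ (iota _ _)); lia. Qed.

Lemma size_pre Y m : size (pre Y m) = m.
Proof. exact: size_mkseq. Qed.

Definition Cm (l : learning_fn) (s : bstring) : nat :=
  \sum_(j < (size s).+1) l (take (size s - j) s).
Definition Cpm (l : learning_fn) (s : bstring) : nat :=
  if s is [::] then 0 else Cm l (take (size s).-1 s).
Definition l3 (l1 l2 : learning_fn) (s : bstring) : bool :=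
  maxn (maxn (Cpm l1 s) (Cpm l2 s)) 1 < maxn (Cm l1 s) (Cm l2 s).

Lemma Cm_pre l Y m : Cm l (pre Y m) = cnt l Y m.+1.
Proof.
rewrite /Cm size_pre.
under eq_bigr => j _ do rewrite take_pre ?leq_subr //.
elim: m => [|m IH]; first by rewrite big_ord_recl big_ord0 /= addn0.
rewrite big_ord_recl subn0 /=.
under eq_bigr => j _ do rewrite /bump /= add1n subSS.
by rewrite IH /= addnC.
Qed.

Lemma Cpm_pre l Y m : Cpm l (pre Y m) = cnt l Y m.
Proof.
case: m => [|m] //.
have -> : pre Y m.+1 = Y 0 :: behead (pre Y m.+1) by [].
rewrite /Cpm -[Y 0 :: _]/(pre Y m.+1) size_pre /= take_pre // Cm_pre //.
Qed.

Definition amax l1 l2 Y m := maxn (cnt l1 Y m) (cnt l2 Y m).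

Lemma cnt_l3 l1 l2 Y m : cnt (l3 l1 l2) Y m = (amax l1 l2 Y m).-1.
Proof.
elim: m => [|m IH] //=.
rewrite IH /l3 !Cpm_pre !Cm_pre /amax /=.
case: (l1 _); case: (l2 _) => /=;
case: ltnP => h /=; lia.
Qed.

Lemma l3_count l1 l2 Y n : 0 < n -> yes_count_ge (l3 l1 l2) Y n ->
  yes_count_ge l1 Y n.+1 \/ yes_count_ge l2 Y n.+1.
Proof.
move=> n0; rewrite !ycg_cnt => -[m]; rewrite cnt_l3 /amax -subn1 => h.
case: (leqP (cnt l1 Y m) (cnt l2 Y m)) => h2; [rewrite (maxn_idPr h2) in h; right | rewrite (maxn_idPl (ltnW h2)) in h; left]; exists m; lia.
Qed.

Lemma cnt_unbounded (l : learning_fn) Y : (forall N, exists2 m, N <= m & l (pre Y m)) ->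
  forall K, exists m, K <= cnt l Y m.
Proof.
move=> hinf; elim => [|K [m hm]]; first by exists 0.
have [m' h1 h2] := hinf m; exists m'.+1 => /=.
have := cnt_mono l Y m (m' - m); rewrite subnKC // h2; lia.
Qed.

Lemma l3_detect_gen l1 l2 Y : 
  (forall K, exists m, K <= amax l1 l2 Y m) ->
  forall N, exists2 m, N <= m & l3 l1 l2 (pre Y m).
Proof.
move=> hK N; have [m hm] := hK N.+2.
apply: (@cnt_gt _ _ N m).
have := cnt_le (l3 l1 l2) Y N; rewrite !cnt_l3 -!subn1; lia.
Qed.

Lemma l3_detect1 (l1 l2 : learning_fn) Y : (forall N, exists2 m, N <= m & l1 (pre Y m)) ->
  forall N, exists2 m, N <= m & l3 l1 l2 (pre Y m).
Proof.
move=> h; apply: l3_detect_gen => K; have [m hm] := cnt_unbounded _ _ h K.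
by exists m; rewrite /amax; lia.
Qed.

Lemma l3_detect2 (l1 l2 : learning_fn) Y : (forall N, exists2 m, N <= m & l2 (pre Y m)) ->
  forall N, exists2 m, N <= m & l3 l1 l2 (pre Y m).
Proof.
move=> h; apply: l3_detect_gen => K; have [m hm] := cnt_unbounded _ _ h K.
by exists m; rewrite /amax; lia.
Qed.

Set Implicit Arguments. Unset Strict Implicit.

Lemma ev_comp1 f g xs y z : peval g xs y -> peval f [:: y] z -> peval (PComp f [:: g]) xs z.
Proof. by move=> h1 h2; apply: ev_comp h2; apply: evs_cons h1 (evs_nil _). Qed.

Lemma ev_comp2 f g1 g2 xs y1 y2 z : peval g1 xs y1 -> peval g2 xs y2 ->
  peval f [:: y1; y2] z -> peval (PComp f [:: g1; g2]) xs z.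
Proof. by move=> h1 h2 h3; apply: ev_comp h3; apply: evs_cons h1 (evs_cons h2 (evs_nil _)). Qed.

Lemma ev_rec_ind g h xs (F : nat -> nat) : peval g xs (F 0) ->
  (forall n, peval h [:: n, F n & xs] (F n.+1)) -> forall n, peval (PRec g h) (n :: xs) (F n).
Proof. by move=> h0 hS; elim => [|n IH]; [apply: ev_rec0 | apply: ev_recS IH (hS n)]. Qed.

Lemma ev_p0 x xs : peval (PProj 0) (x :: xs) x.
Proof. exact: (ev_proj 0 (x :: xs)). Qed.
Lemma ev_p1 x y xs : peval (PProj 1) [:: x, y & xs] y.
Proof. exact: (ev_proj 1 [:: x, y & xs]). Qed.
Lemma ev_p2 x y z xs : peval (PProj 2) [:: x, y, z & xs] z.
Proof. exact: (ev_proj 2 [:: x, y, z & xs]). Qed.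

Arguments ev_p0 {x xs}. Arguments ev_p1 {x y xs}. Arguments ev_p2 {x y z xs}.

Definition K1 := PComp PSucc [:: PZero].
Lemma ev_K1 xs : peval K1 xs 1.
Proof. by apply: (ev_comp1 (y:=0)); [apply: ev_zero | apply: (ev_succ [:: 0])]. Qed.

Definition predc := PComp (PRec PZero (PProj 0)) [:: PProj 0].
Lemma ev_pred x : peval predc [:: x] x.-1.
Proof.
apply: ev_comp1 ev_p0 _; apply: (ev_rec_ind (F := predn)) => [|n]; first exact: ev_zero.
exact: ev_p0.
Qed.

Definition subc := PComp (PRec (PProj 0) (PComp predc [:: PProj 1])) [:: PProj 1; PProj 0].
Lemma ev_sub a b : peval subc [:: a; b] (a - b).
Proof.
apply: (ev_comp2 ev_p1 ev_p0).
apply: (ev_rec_ind (F := fun n => a - n)) => [|n]; first by rewrite subn0; exact: ev_p0.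
by apply: ev_comp1 ev_p1 _; rewrite subnS; apply: ev_pred.
Qed.

Definition addc := PComp (PRec (PProj 0) (PComp PSucc [:: PProj 1])) [:: PProj 0; PProj 1].
Lemma ev_add a b : peval addc [:: a; b] (a + b).
Proof.
apply: (ev_comp2 ev_p0 ev_p1).
apply: (ev_rec_ind (F := fun n => n + b)) => [|n]; first exact: ev_p0.
by apply: ev_comp1 ev_p1 _; apply: (ev_succ [:: n + b]).
Qed.

Definition sgnc := PComp (PRec PZero (PComp PSucc [:: PZero])) [:: PProj 0].
Lemma ev_sgn x : peval sgnc [:: x] (0 < x).
Proof.
apply: ev_comp1 ev_p0 _.
apply: (ev_rec_ind (F := fun n => nat_of_bool (0 < n))) => [|n]; first exact: ev_zero.
exact: ev_K1.
Qed.

Definition parc := PComp (PRec PZero (PComp subc [:: K1; PProj 1])) [:: PProj 0].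
Lemma ev_par x : peval parc [:: x] (odd x).
Proof.
apply: ev_comp1 ev_p0 _.
apply: (ev_rec_ind (F := fun n => nat_of_bool (odd n))) => [|n]; first exact: ev_zero.
apply: (ev_comp2 (ev_K1 _) ev_p1); rewrite /=; case: (odd n) => /=; exact: ev_sub.
Qed.

Definition halfc := PComp (PRec PZero (PComp addc [:: PProj 1; PComp parc [:: PProj 0]])) [:: PProj 0].
Lemma ev_half x : peval halfc [:: x] x./2.
Proof.
apply: ev_comp1 ev_p0 _.
apply: (ev_rec_ind (F := half)) => [|n]; first exact: ev_zero.
apply: (ev_comp2 ev_p1 (ev_comp1 ev_p0 (ev_par n))).
by rewrite /= uphalf_half addnC; apply: ev_add.
Qed.

Definition shiftR := PRec (PProj 0) (PComp halfc [:: PProj 1]).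
Lemma ev_shift j n : peval shiftR [:: j; n] (iter j half n).
Proof.
apply: (ev_rec_ind (F := fun j => iter j half n)) => [|k]; first exact: ev_p0.
by apply: ev_comp1 ev_p1 _; rewrite iterS; apply: ev_half.
Qed.

Definition maxc := PComp addc [:: PProj 0; PComp subc [:: PProj 1; PProj 0]].
Lemma ev_max a b : peval maxc [:: a; b] (maxn a b).
Proof.
apply: (ev_comp2 ev_p0 (ev_comp2 ev_p1 ev_p0 (ev_sub b a))).
by rewrite maxnE; apply: ev_add.
Qed.

Definition ltc := PComp sgnc [:: PComp subc [:: PProj 1; PProj 0]].
Lemma ev_lt a b : peval ltc [:: a; b] (a < b).
Proof.
apply: (ev_comp1 (ev_comp2 ev_p1 ev_p0 (ev_sub b a))).
by rewrite -subn_gt0; apply: ev_sgn.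
Qed.

Lemma enc_rcons t b : enc (rcons t b) = b + (enc t).*2.
Proof. by rewrite /enc foldl_rcons addnC. Qed.

Lemma enc_gt s : size s < enc s.
Proof.
elim/last_ind: s => [|t b IH] //; rewrite enc_rcons size_rcons; case: b => /=; lia.
Qed.

Lemma enc_nil : enc [::] = 1. Proof. by []. Qed.

Lemma half_enc s : s != [::] -> (enc s)./2 = enc (take (size s).-1 s).
Proof.
case/lastP: s => [|t b] // _; rewrite enc_rcons half_bit_double size_rcons /=.
by rewrite -cats1 take_size_cat.
Qed.

Lemma shift_enc s j : iter j half (enc s) =
  if j <= size s then enc (take (size s - j) s) else 0.
Proof.
elim: j => [|j IH]; first by rewrite subn0 take_size.
rewrite iterS IH; case: (leqP j.+1 (size s)) => h.
- have h1 : j <= size s by lia.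
  have hsz : size (take (size s - j) s) = size s - j by rewrite size_take; case: ifP; lia.
  rewrite h1 half_enc; last by apply/eqP => e; move: hsz; rewrite e /=; lia.
  rewrite hsz take_takel; last lia.
  by congr (enc (take _ s)); lia.
- case: (ltngtP j (size s)) => h' //=; [lia | by rewrite h' subnn take0].
Qed.

Lemma ev_conv c xs y z : peval c xs y -> y = z -> peval c xs z.
Proof. by move=> h <-. Qed.

Definition Tc := PComp shiftR [:: PProj 0; PProj 1].
Definition termc c := PComp subc [:: PComp c [:: PComp addc [:: Tc; PComp subc [:: K1; Tc]]];
                                     PComp subc [:: K1; PComp sgnc [:: Tc]]].

Definition tv (l : learning_fn) s j : nat := if j < (size s).+1 then nat_of_bool (l (take (size s - j) s)) else 0.

Lemma ev_T j n : peval Tc [:: j; n] (iter j half n).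
Proof. exact: (ev_comp2 ev_p0 ev_p1 (ev_shift j n)). Qed.

Lemma ev_term c (l : learning_fn) (hc : forall x, peval c [:: enc x] (l x)) s j :
  peval (termc c) [:: j; enc s] (tv l s j).
Proof.
rewrite /tv ltnS; have hT := ev_T j (enc s); rewrite shift_enc in hT.
case: (leqP j (size s)) => h; rewrite ?h ?(leqNgt j) ?h /= in hT.
- have hp := enc_gt (take (size s - j) s).
  apply: (ev_comp2 (ev_comp1 (ev_comp2 hT (ev_comp2 (ev_K1 _) hT (ev_sub _ _)) (ev_add _ _)) _)
                   (ev_comp2 (ev_K1 _) (ev_comp1 hT (ev_sgn _)) (ev_sub _ _))).
    by rewrite (_ : _ + (1 - _) = enc (take (size s - j) s)); [exact: hc | lia].
  have -> : (0 < enc (take (size s - j) s)) = true by lia.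
  by apply: ev_conv (ev_sub _ _) _; rewrite subn0.
- apply: (ev_comp2 (ev_comp1 (ev_comp2 hT (ev_comp2 (ev_K1 _) hT (ev_sub _ _)) (ev_add _ _)) _)
                   (ev_comp2 (ev_K1 _) (ev_comp1 hT (ev_sgn _)) (ev_sub _ _))).
    exact: (hc [::]).
  by apply: ev_conv (ev_sub _ _) _; case: (l _).
Qed.

Definition SumR c := PRec (PComp (termc c) [:: PZero; PProj 0])
  (PComp addc [:: PProj 1; PComp (termc c) [:: PSucc; PProj 2]]).

Lemma ev_sumR c (l : learning_fn) (hc : forall x, peval c [:: enc x] (l x)) s J :
  peval (SumR c) [:: J; enc s] (\sum_(j < J.+1) tv l s j).
Proof.
apply: (ev_rec_ind (F := fun J => \sum_(j < J.+1) tv l s j)) => [|n].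
  rewrite big_ord_recr big_ord0 /=.
  exact: (ev_comp2 (ev_zero _) ev_p0 (ev_term hc s 0)).
have e := ev_term hc s n.+1.
have e2 : peval PSucc [:: n; \sum_(j < n.+1) tv l s j; enc s] n.+1 by exact: ev_succ.
refine (ev_comp2 ev_p1 (ev_comp2 e2 ev_p2 e) _).
by apply: ev_conv (ev_add _ _) _; rewrite [in RHS]big_ord_recr.
Qed.

Lemma iter_half0 j : iter j half 0 = 0.
Proof. by elim: j => //= j ->. Qed.

Lemma ev_term0 c (l : learning_fn) (hc : forall x, peval c [:: enc x] (l x)) j :
  peval (termc c) [:: j; 0] 0.
Proof.
have hT := ev_T j 0; rewrite iter_half0 in hT.
apply: (ev_comp2 (ev_comp1 (ev_comp2 hT (ev_comp2 (ev_K1 _) hT (ev_sub _ _)) (ev_add _ _)) _)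
                 (ev_comp2 (ev_K1 _) (ev_comp1 hT (ev_sgn _)) (ev_sub _ _))).
  exact: (hc [::]).
by apply: ev_conv (ev_sub _ _) _; case: (l _).
Qed.

Lemma ev_sumR0 c (l : learning_fn) (hc : forall x, peval c [:: enc x] (l x)) J :
  peval (SumR c) [:: J; 0] 0.
Proof.
apply: (ev_rec_ind (F := fun _ => 0)) => [|n].
  exact: (ev_comp2 (ev_zero _) ev_p0 (ev_term0 hc 0)).
have e2 : peval PSucc [:: n; 0; 0] n.+1 by exact: ev_succ.
exact: (ev_comp2 ev_p1 (ev_comp2 e2 ev_p2 (ev_term0 hc _)) (ev_add _ _)).
Qed.

Definition Cc c := PComp (SumR c) [:: PProj 0; PProj 0].
Definition Cpc c := PComp (Cc c) [:: halfc].

Lemma ev_Cc c (l : learning_fn) (hc : forall x, peval c [:: enc x] (l x)) s :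
  peval (Cc c) [:: enc s] (Cm l s).
Proof.
apply: ev_conv (ev_comp2 ev_p0 ev_p0 (ev_sumR hc s (enc s))) _.
have hs := enc_gt s.
rewrite /Cm (big_ord_widen (enc s).+1 (fun j => nat_of_bool (l (take (size s - j) s)))); last lia.
by rewrite [RHS]big_mkcond.
Qed.

Lemma ev_Cpc c (l : learning_fn) (hc : forall x, peval c [:: enc x] (l x)) s :
  peval (Cpc c) [:: enc s] (Cpm l s).
Proof.
apply: (ev_comp1 (ev_half _)).
case: s => [|b s]; first exact: (ev_comp2 ev_p0 ev_p0 (ev_sumR0 hc 0)).
rewrite half_enc //; exact: ev_Cc.
Qed.

Definition l3c c1 c2 := PComp ltc [:: PComp maxc [:: PComp maxc [:: Cpc c1; Cpc c2]; K1];
                                     PComp maxc [:: Cc c1; Cc c2]].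

Lemma ev_l3 c1 c2 (l1 l2 : learning_fn) (h1 : forall x, peval c1 [:: enc x] (l1 x))
  (h2 : forall x, peval c2 [:: enc x] (l2 x)) s :
  peval (l3c c1 c2) [:: enc s] (l3 l1 l2 s).
Proof.
exact: (ev_comp2 (ev_comp2 (ev_comp2 (ev_Cpc h1 s) (ev_Cpc h2 s) (ev_max _ _)) (ev_K1 _) (ev_max _ _))
                 (ev_comp2 (ev_Cc h1 s) (ev_Cc h2 s) (ev_max _ _)) (ev_lt _ _)).
Qed.
Local Open Scope ring_scope.

Notation R := Rdefinitions.R.
Definition w (s : bstring) : \bar R := ((2%:R : R) ^- size s)%:E.

Lemma w_ge0 s : (0 <= w s)%E.
Proof. by rewrite /w lee_fin invr_ge0 exprn_ge0. Qed.

Definition ilv (a b : nat -> bstring) (i : nat) := if odd i then b i./2 else a i./2.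

Lemma ilv_partial a b n :
  (\sum_(0 <= i < n.*2) w (ilv a b i) = \sum_(0 <= i < n) w (a i) + \sum_(0 <= i < n) w (b i))%E.
Proof.
elim: n => [|n IH]; first by rewrite !big_geq // adde0.
rewrite doubleS !big_nat_recr //= IH /ilv /= odd_double /= half_double uphalf_double.
by rewrite -!addeA; congr (_ + _)%E; rewrite addeCA.
Qed.

Lemma ilv_sum a b :
  (\sum_(0 <= i <oo) w (ilv a b i) <= \sum_(0 <= i <oo) w (a i) + \sum_(0 <= i <oo) w (b i))%E.
Proof.
have h : forall n, (0 <= n)%N -> true -> (0 <= w (ilv a b n))%E by move=> *; exact: w_ge0.
rewrite (cvg_lim _ (ereal_nondecreasing_cvgn (ereal_nondecreasing_series h))) //.
apply: ge_ereal_sup => _ [n _ <-] /=.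
apply: (@le_trans _ _ (\sum_(0 <= i < n.*2) w (ilv a b i))%E).
  by apply: lee_sum_nneg_natr; [move=> *; exact: w_ge0 | rewrite -addnn leq_addr].
rewrite ilv_partial; apply: leeD; apply: nneseries_lim_ge => *; exact: w_ge0.
Qed.

Lemma cover_ilv A B a b : A `<=` \bigcup_i cyl (a i) -> B `<=` \bigcup_i cyl (b i) ->
  A `|` B `<=` \bigcup_i cyl (ilv a b i).
Proof.
move=> hA hB x [/hA [i _ hi]|/hB [i _ hi]].
  by exists i.*2 => //; rewrite /ilv odd_double half_double.
by exists i.*2.+1 => //; rewrite /ilv /= odd_double /= uphalf_double.
Qed.

Lemma lambda_U A B (x y : R) : (lambda A <= x%:E)%E -> (lambda B <= y%:E)%E ->
  (lambda (A `|` B) <= (x + y)%:E)%E.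
Proof.
move=> hA hB; apply/lee_addgt0Pr => e e0.
have e2 : 0 < e / 2 by rewrite divr_gt0.
have /ereal_inf_lt [_ [a ca <-] sa] : (lambda A < (x + e / 2)%:E)%E.
  by apply: (le_lt_trans hA); rewrite lte_fin ltrDl.
have /ereal_inf_lt [_ [b cb <-] sb] : (lambda B < (y + e / 2)%:E)%E.
  by apply: (le_lt_trans hB); rewrite lte_fin ltrDl.
apply: (@le_trans _ _ (\sum_(0 <= i <oo) w (ilv a b i))%E).
  by apply: ereal_inf_lbound; exists (ilv a b) => //; exact: cover_ilv.
apply: (le_trans (ilv_sum a b)).
have -> : ((x + y)%:E + e%:E = (x + e / 2)%:E + (y + e / 2)%:E)%E.
  by rewrite -!EFinD; congr (_%:E); rewrite [RHS]addrACA -splitr.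
by apply: leeD; apply: ltW.
Qed.

Lemma lambda_mono (A B : set cantor) : A `<=` B -> (lambda A <= lambda B)%E.
Proof.
move=> AB; apply: ereal_inf_le_tmp => _ [c hc <-]; exists c => //.
exact: subset_trans hc.
Qed.

Lemma pow_half (n : nat) :
  ((2%:R : Rdefinitions.R) ^- n.+2 + (2%:R : Rdefinitions.R) ^- n.+2 = (2%:R : Rdefinitions.R) ^- n.+1)%R.
Proof.
rewrite [in LHS]exprS invfM -mulrDl.
have h : ((2%:R : Rdefinitions.R) ^+ n.+1 != 0)%R by rewrite expf_neq0 // pnatr_eq0.
by field.
Qed.

Lemma l3_measure (l1 l2 : learning_fn) X1 X2 :
  unif_weak_detects l1 X1 -> unif_weak_detects l2 X2 ->
  forall n : nat, (lambda [set Y | yes_count_ge (l3 l1 l2) Y n] <= ((2%:R : Rdefinitions.R) ^- n)%:E)%E.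
Proof.
move=> [_ h1] [_ h2] [|n].
  apply: le_trans (h1 0); apply: lambda_mono => Y _ /=; by exists [::].
apply: le_trans (_ : lambda ([set Y | yes_count_ge l1 Y n.+2] `|` [set Y | yes_count_ge l2 Y n.+2]) <= _)%E.
  by apply: lambda_mono => Y /= /l3_count; apply.
by rewrite -pow_half; apply: lambda_U.
Qed.

Lemma combine (G1 G2 : set cantor) (l1 l2 : learning_fn) :
  unif_weak_detects_all l1 G1 ->
  unif_weak_detects_all l2 G2 ->
  exists l, [\/ l = l1, l = l2 | l = l3 l1 l2] /\ unif_weak_detects_all l (G1 `|` G2).
Proof.
move=> H1 H2.
case: (pselect (exists X, G2 X)) => [[X2 hX2]|n2].
  case: (pselect (exists X, G1 X)) => [[X1 hX1]|n1].
    exists (l3 l1 l2); split; first by apply: Or33.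
    move=> X hX; split; last exact: l3_measure (H1 _ hX1) (H2 _ hX2).
    case: hX => hX; [by apply: l3_detect1; case: (H1 _ hX) | by apply: l3_detect2; case: (H2 _ hX)].
  exists l2; split; first by apply: Or32.
  by move=> X [hX|hX]; [exfalso; apply: n1; exists X | apply: H2].
exists l1; split; first by apply: Or31.
by move=> X [hX|hX]; [apply: H1 | exfalso; apply: n2; exists X].
Qed.

Theorem mainTheorem3 (G1 G2 : set cantor) (l1 l2 : learning_fn) :
  unif_weak_detects_all l1 G1 ->
  unif_weak_detects_all l2 G2 ->
  (exists l3 : learning_fn, unif_weak_detects_all l3 (G1 `|` G2)) /\
  (computable l1 -> computable l2 ->
     exists l3 : learning_fn, computable l3 /\ unif_weak_detects_all l3 (G1 `|` G2)).
Proof.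
move=> H1 H2; have [l [hl hd]] := combine H1 H2.
split; first by exists l.
move=> [c1 hc1] [c2 hc2]; exists l; split => //.
case: hl => ->; [by exists c1 | by exists c2 | exists (l3c c1 c2) => s].
exact: ev_l3.
Qed.
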